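(* Let $A=(a_{i,j})$ be an $n\times n$ matrix with entries in an associative (not necessarily commutative) algebra and fix $1\le j\le n$. If the column determinant of every left $j$-minor of $A$ is zero, then $\mathrm{cdet}A=0$.
   Context: For an $m\times m$ matrix $B=(b_{i,k})$ over an associative algebra, its column determinant is $\mathrm{cdet}B:=\sum_{w\in S_m}\mathrm{sgn}(w)b_{w1,1}b_{w2,2}\cdots b_{wm,m}$. A left $j$-minor of $A$ is a $j\times j$ submatrix $(a_{i_p,q})_{1\le p,q\le j}$ for some $1\le i_1<i_2<\cdots<i_j\le n$ (rows $i_1,\dots,i_j$, columns $1,\dots,j$). *)

(* Defs.v *)
From HB Require Import structures.
From mathcomp Require Import all_boot all_order all_algebra all_fingroup.
Set Implicit Arguments. Unset Strict Implicit. Unset Printing Implicit Defensive.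
Import GRing.Theory.
Local Open Scope ring_scope.

Definition cdet (R : pzRingType) (m : nat) (B : 'M[R]_m) : R :=
  \sum_(w : 'S_m) (-1) ^+ w * \prod_(k < m) B (w k) k.

Definition left_minor (R : Type) (n j : nat) (Hj : (j <= n)%N)
    (A : 'M[R]_n) (f : 'I_j -> 'I_n) : 'M[R]_j :=
  \matrix_(p < j, q < j) A (f p) (widen_ord Hj q).

Definition strictly_increasing (n j : nat) (f : 'I_j -> 'I_n) : Prop :=
  forall p q : 'I_j, (p < q)%N -> (f p < f q)%N.

(* Main.v *)
Require Import Defs.
From HB Require Import structures.
From mathcomp Require Import all_boot all_order all_algebra all_fingroup.
Import GRing.Theory.
Local Open Scope ring_scope.

Lemma cdet_expand_zero (B : pzRingType) m (A : 'M[B]_m.+1) :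
  (forall i, cdet (row' i (col' ord_max A)) = 0) -> cdet A = 0.
Proof.
move=> H0.
rewrite /cdet (partition_big (fun s : 'S_m.+1 => s ord_max) xpredT) //=.
apply: big1 => i _.
rewrite (reindex (lift_perm ord_max i)); last first.
  pose ulsf i (s : 'S_m.+1) k := odflt k (unlift (s i) (s (lift i k))).
  have ulsfK i1 (s : 'S_m.+1) k: lift (s i1) (ulsf i1 s k) = s (lift i1 k).
    rewrite /ulsf; have:= neq_lift i1 k.
    by rewrite -(can_eq (permK s)) => /unlift_some[] ? ? ->.
  have inj_ulsf: injective (ulsf ord_max _).
    move=> s; apply: can_inj (ulsf (s ord_max) s^-1%g) _ => k'.
    by rewrite {1}/ulsf ulsfK !permK liftK.
  exists (fun s => perm (inj_ulsf s)) => [s _ | s].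
    by apply/permP=> k'; rewrite permE /ulsf lift_perm_lift lift_perm_id liftK.
  move/(s _ =P _) => si0; apply/permP=> k.
  case: (unliftP ord_max k) => [k'|] ->; rewrite ?lift_perm_id //.
  by rewrite lift_perm_lift -si0 permE ulsfK.
rewrite (eq_bigl xpredT); last by move=> s; rewrite lift_perm_id eqxx.
have Hw : forall k : 'I_m, widen_ord (leqnSn m) k = lift ord_max k.
  by move=> k; apply: val_inj; rewrite /= /bump leqNgt ltn_ord.
transitivity (\sum_(s : 'S_m) (-1) ^+ (odd (@ord_max m) (+) odd i) *
   ((-1) ^+ s * \prod_(k < m) row' i (col' ord_max A) (s k) k) * A i ord_max).
  apply: eq_bigr => s _.
  rewrite big_ord_recr /= lift_perm_id odd_lift_perm signr_addb -!mulrA; congr (_ * (_ * _)).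
  idtac.
congr (_ * _); apply: eq_bigr => k _.
  by rewrite Hw lift_perm_lift !mxE.
rewrite -big_distrl -big_distrr /=; have := H0 i; rewrite /cdet => ->.
by rewrite mulr0 mul0r.
Qed.

Theorem lemma2p1 (K : fieldType) (B : algType K) (n j : nat)
    (A : 'M[B]_n) (Hj1 : (1 <= j)%N) (Hj : (j <= n)%N) :
  (forall f : 'I_j -> 'I_n, strictly_increasing f ->
     cdet (left_minor Hj A f) = 0) ->
  cdet A = 0.
Proof.
elim: n A Hj => [|m IH] A Hj H; first by move: (leq_trans Hj1 Hj).
case: (ltngtP j m.+1) => [lt|gt|eq].
- apply: cdet_expand_zero => i.
  have Hj' : (j <= m)%N by [].
  apply: (IH _ Hj') => f Hf.
  have Hf' : strictly_increasing (fun p => lift i (f p)).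
    by move=> p q pq; rewrite /= ltnNge leq_bump2 -ltnNge; apply: Hf.
  rewrite -(H _ Hf'); congr cdet; apply/matrixP => p q; rewrite !mxE.
  congr (A _ _); apply: val_inj => /=.
  by rewrite /bump /= leqNgt (leq_trans (ltn_ord q) Hj').
- by rewrite ltnNge Hj in gt.
- subst j.
  have Hf : strictly_increasing (fun p : 'I_m.+1 => widen_ord Hj p) by [].
  rewrite -(H _ Hf); congr cdet; apply/matrixP => p q; rewrite mxE.
  by congr (A _ _); apply: val_inj.
Qed.
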